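(* For all $X,Y\in\mathcal C$, the set $H=\{\Delta\in\mathrm{Bunch}\mid\forall\Delta'\in X.\ (\Delta\mathbin{;}\Delta')\in Y\}$ belongs to $\mathcal C$ and is the Heyting implication of $X$ and $Y$ in $\mathcal C$: for every $Z\in\mathcal C$, $Z\cap X\subseteq Y$ if and only if $Z\subseteq H$.
   Context: Formulas of BI: $\varphi,\psi ::= \top \mid \bot \mid \varphi\wedge\psi \mid \varphi\vee\psi \mid \varphi\to\psi \mid \mathsf{emp} \mid \varphi\ast\psi \mid \varphi -\!\!\ast\, \psi \mid a$, $a\in\mathrm{Atom}$. Bunches are finite binary trees whose leaves are formulas or empty bunches $\varnothing_m,\varnothing_a$ and whose internal nodes are labelled by the multiplicative comma ($\Delta_1\mathbin{,}\Delta_2$) or the additive semicolon ($\Delta_1\mathbin{;}\Delta_2$). A bunched context $\Delta(-)$ is a bunch with one leaf replaced by a hole; $\Delta(\Gamma)$ fills it with $\Gamma$. Bunch equivalence $\equiv$ is the least equivalence relation making $\mathbin{,}$ commutative, associative with unit $\varnothing_m$, $\mathbin{;}$ commutative, associative with unit $\varnothing_a$, and closed under contexts; $\mathrm{Bunch}$ is the set of bunches modulo $\equiv$. The cut-free BI sequent calculus ($\Delta\vdash_{\mathsf{cf}}\varphi$) has the rules: (ax) $a\vdash a$ for atoms $a$; (equiv) from $\Delta'\vdash\varphi$, $\Delta\equiv\Delta'$ infer $\Delta\vdash\varphi$; (W;) from $\Delta(\Delta_1)\vdash\varphi$ infer $\Delta(\Delta_1\mathbin{;}\Delta_2)\vdash\varphi$;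 (C;) from $\Delta(\Delta_1\mathbin{;}\Delta_1)\vdash\varphi$ infer $\Delta(\Delta_1)\vdash\varphi$; (empR) $\varnothing_m\vdash\mathsf{emp}$; (empL) from $\Delta(\varnothing_m)\vdash\varphi$ infer $\Delta(\mathsf{emp})\vdash\varphi$; ($\ast$R) from $\Delta_1\vdash\varphi$, $\Delta_2\vdash\psi$ infer $\Delta_1\mathbin{,}\Delta_2\vdash\varphi\ast\psi$; ($\ast$L) from $\Delta(\varphi\mathbin{,}\psi)\vdash\chi$ infer $\Delta(\varphi\ast\psi)\vdash\chi$; ($-\!\ast$R) from $\Delta\mathbin{,}\varphi\vdash\psi$ infer $\Delta\vdash\varphi-\!\!\ast\,\psi$; ($-\!\ast$L) from $\Delta_1\vdash\varphi$, $\Delta(\Delta_2\mathbin{,}\psi)\vdash\chi$ infer $\Delta((\Delta_1\mathbin{,}\Delta_2)\mathbin{,}(\varphi-\!\!\ast\,\psi))\vdash\chi$; ($\top$R) $\varnothing_a\vdash\top$; ($\top$L) from $\Delta(\varnothing_a)\vdash\varphi$ infer $\Delta(\top)\vdash\varphi$; ($\wedge$R) from $\Delta_1\vdash\varphi$, $\Delta_2\vdash\psi$ infer $\Delta_1\mathbin{;}\Delta_2\vdash\varphi\wedge\psi$; ($\wedge$L) from $\Delta(\varphi\mathbin{;}\psi)\vdash\chi$ infer $\Delta(\varphi\wedge\psi)\vdash\chi$; ($\to$R) from $\Delta\mathbin{;}\varphi\vdash\psi$ infer $\Delta\vdash\varphi\to\psi$; ($\to$L) from $\Delta_1\vdash\varphi$,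 $\Delta(\Delta_2\mathbin{;}\psi)\vdash\chi$ infer $\Delta((\Delta_1\mathbin{;}\Delta_2)\mathbin{;}(\varphi\to\psi))\vdash\chi$; ($\bot$L) $\Delta(\bot)\vdash\varphi$; ($\vee$R1/2) from $\Delta\vdash\varphi$ (resp. $\Delta\vdash\psi$) infer $\Delta\vdash\varphi\vee\psi$; ($\vee$L) from $\Delta(\varphi)\vdash\chi$, $\Delta(\psi)\vdash\chi$ infer $\Delta(\varphi\vee\psi)\vdash\chi$. (No cut rule.) For a formula $\varphi$, $[\![\varphi]\!]^{\mathrm{out}}=\{\Delta\in\mathrm{Bunch}\mid\Delta\vdash_{\mathsf{cf}}\varphi\}$. For $X\subseteq\mathrm{Bunch}$, $\mathrm{cl}(X)=\bigcap\{[\![\varphi]\!]^{\mathrm{out}}\mid X\subseteq[\![\varphi]\!]^{\mathrm{out}}\}$, and $\mathcal C=\{X\subseteq\mathrm{Bunch}\mid X=\mathrm{cl}(X)\}$. *)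

(* Defs.v *)
Set Implicit Arguments.

Section BI.
Variable Atom : Type.

Inductive form : Type :=
| FTop | FBot
| FAnd (p q : form) | FOr (p q : form) | FImp (p q : form)
| FEmp | FStar (p q : form) | FWand (p q : form)
| FAtom (a : Atom).

Inductive bunch : Type :=
| BForm (p : form)
| BEmpM
| BEmpA
| BComma (d1 d2 : bunch)
| BSemi (d1 d2 : bunch).

Inductive ctx : Type :=
| CHole
| CCommaL (c : ctx) (d : bunch)
| CCommaR (d : bunch) (c : ctx)
| CSemiL (c : ctx) (d : bunch)
| CSemiR (d : bunch) (c : ctx).

Fixpoint fill (c : ctx) (g : bunch) : bunch :=
  match c with
  | CHole => g
  | CCommaL c d => BComma (fill c g) d
  | CCommaR d c => BComma d (fill c g)
  | CSemiL c d => BSemi (fill c g) d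
  | CSemiR d c => BSemi d (fill c g)
  end.

Inductive bequiv : bunch -> bunch -> Prop :=
| beq_refl d : bequiv d d
| beq_sym d1 d2 : bequiv d1 d2 -> bequiv d2 d1
| beq_trans d1 d2 d3 : bequiv d1 d2 -> bequiv d2 d3 -> bequiv d1 d3
| beq_comma_comm d1 d2 : bequiv (BComma d1 d2) (BComma d2 d1)
| beq_comma_assoc d1 d2 d3 :
    bequiv (BComma d1 (BComma d2 d3)) (BComma (BComma d1 d2) d3)
| beq_comma_unit d : bequiv (BComma d BEmpM) d
| beq_semi_comm d1 d2 : bequiv (BSemi d1 d2) (BSemi d2 d1)
| beq_semi_assoc d1 d2 d3 :
    bequiv (BSemi d1 (BSemi d2 d3)) (BSemi (BSemi d1 d2) d3)
| beq_semi_unit d : bequiv (BSemi d BEmpA) d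
| beq_ctx c d1 d2 : bequiv d1 d2 -> bequiv (fill c d1) (fill c d2).

Inductive cf : bunch -> form -> Prop :=
| cf_ax a : cf (BForm (FAtom a)) (FAtom a)
| cf_equiv d d' p : cf d' p -> bequiv d d' -> cf d p
| cf_W c d1 d2 p : cf (fill c d1) p -> cf (fill c (BSemi d1 d2)) p
| cf_C c d1 p : cf (fill c (BSemi d1 d1)) p -> cf (fill c d1) p
| cf_empR : cf BEmpM FEmp
| cf_empL c p : cf (fill c BEmpM) p -> cf (fill c (BForm FEmp)) p
| cf_starR d1 d2 p q : cf d1 p -> cf d2 q -> cf (BComma d1 d2) (FStar p q)
| cf_starL c p q r :
    cf (fill c (BComma (BForm p) (BForm q))) r -> cf (fill c (BForm (FStar p q))) r
| cf_wandR d p q : cf (BComma d (BForm p)) q -> cf d (FWand p q)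
| cf_wandL c d1 d2 p q r :
    cf d1 p -> cf (fill c (BComma d2 (BForm q))) r ->
    cf (fill c (BComma (BComma d1 d2) (BForm (FWand p q)))) r
| cf_topR : cf BEmpA FTop
| cf_topL c p : cf (fill c BEmpA) p -> cf (fill c (BForm FTop)) p
| cf_andR d1 d2 p q : cf d1 p -> cf d2 q -> cf (BSemi d1 d2) (FAnd p q)
| cf_andL c p q r :
    cf (fill c (BSemi (BForm p) (BForm q))) r -> cf (fill c (BForm (FAnd p q))) r
| cf_impR d p q : cf (BSemi d (BForm p)) q -> cf d (FImp p q)
| cf_impL c d1 d2 p q r :
    cf d1 p -> cf (fill c (BSemi d2 (BForm q))) r ->
    cf (fill c (BSemi (BSemi d1 d2) (BForm (FImp p q)))) r
| cf_botL c p : cf (fill c (BForm FBot)) p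
| cf_orR1 d p q : cf d p -> cf d (FOr p q)
| cf_orR2 d p q : cf d q -> cf d (FOr p q)
| cf_orL c p q r :
    cf (fill c (BForm p)) r -> cf (fill c (BForm q)) r -> cf (fill c (BForm (FOr p q))) r.

(* Sets of bunches are predicates on (representative) bunches. *)
Definition bset := bunch -> Prop.

Definition out (p : form) : bset := fun d => cf d p.

Definition subset (X Y : bset) : Prop := forall d, X d -> Y d.
Definition seteq (X Y : bset) : Prop := forall d, X d <-> Y d.

Definition cl (X : bset) : bset :=
  fun d => forall p, subset X (out p) -> out p d.

Definition inC (X : bset) : Prop := seteq X (cl X).

Definition heyting_imp (X Y : bset) : bset :=
  fun d => forall d', X d' -> Y (BSemi d d').

End BI.

(* Main.v *)
Require Import Defs.

Section P.
Variable At : Type.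
Notation form := (form At).
Notation bunch := (bunch At).
Notation ctx := (ctx At).
Notation BEmpM := (@BEmpM At).
Notation BEmpA := (@BEmpA At).
Notation CHole := (@CHole At).
Notation FTop := (@FTop At).
Notation FBot := (@FBot At).
Notation FEmp := (@FEmp At).

Fixpoint ccomp (c1 c2 : ctx) : ctx :=
  match c1 with
  | Defs.CHole _ => c2
  | CCommaL c d => CCommaL (ccomp c c2) d
  | CCommaR d c => CCommaR d (ccomp c c2)
  | CSemiL c d => CSemiL (ccomp c c2) d
  | CSemiR d c => CSemiR d (ccomp c c2)
  end.

Lemma fill_comp c1 c2 g : fill (ccomp c1 c2) g = fill c1 (fill c2 g).
Proof. induction c1; simpl; congruence. Qed.

Inductive repl (A : form) (B : bunch) : bunch -> bunch -> Prop :=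
| r_keep x : repl A B (BForm x) (BForm x)
| r_rep : repl A B (BForm A) B
| r_m : repl A B BEmpM BEmpM
| r_a : repl A B BEmpA BEmpA
| r_comma d1 d2 e1 e2 : repl A B d1 e1 -> repl A B d2 e2 -> repl A B (BComma d1 d2) (BComma e1 e2)
| r_semi d1 d2 e1 e2 : repl A B d1 e1 -> repl A B d2 e2 -> repl A B (BSemi d1 d2) (BSemi e1 e2).

Inductive replc (A : form) (B : bunch) : ctx -> ctx -> Prop :=
| rc_hole : replc A B CHole CHole
| rc_cl c c' d d' : replc A B c c' -> repl A B d d' -> replc A B (CCommaL c d) (CCommaL c' d')
| rc_cr c c' d d' : replc A B c c' -> repl A B d d' -> replc A B (CCommaR d c) (CCommaR d' c')
| rc_sl c c' d d' : replc A B c c' -> repl A B d d' -> replc A B (CSemiL c d) (CSemiL c' d')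
| rc_sr c c' d d' : replc A B c c' -> repl A B d d' -> replc A B (CSemiR d c) (CSemiR d' c').

Section R.
Variable A : form.
Variable B : bunch.

Lemma repl_refl d : repl A B d d.
Proof. induction d; constructor; auto. Qed.

Lemma repl_fill c c' g g' : replc A B c c' -> repl A B g g' -> repl A B (fill c g) (fill c' g').
Proof. induction 1; simpl; intros; try constructor; auto. Qed.

Lemma repl_fill_inv c g x : repl A B (fill c g) x ->
  exists c' g', x = fill c' g' /\ replc A B c c' /\ repl A B g g'.
Proof.
  revert x; induction c; simpl; intros x H.
  - exists CHole, x; repeat split; auto; constructor.
  - inversion H; subst. destruct (IHc _ H2) as [c' [g' [E [H5 H6]]]]; subst.
    exists (CCommaL c' e2), g'; repeat split; auto; constructor; auto.
  - inversion H; subst. destruct (IHc _ H4) as [c' [g' [E [H5 H6]]]]; subst.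
    exists (CCommaR e1 c'), g'; repeat split; auto; constructor; auto.
  - inversion H; subst. destruct (IHc _ H2) as [c' [g' [E [H5 H6]]]]; subst.
    exists (CSemiL c' e2), g'; repeat split; auto; constructor; auto.
  - inversion H; subst. destruct (IHc _ H4) as [c' [g' [E [H5 H6]]]]; subst.
    exists (CSemiR e1 c'), g'; repeat split; auto; constructor; auto.
Qed.

Ltac rinv :=
  repeat match goal with
  | H : repl _ _ (BComma _ _) _ |- _ => inversion H; subst; clear H
  | H : repl _ _ (BSemi _ _) _ |- _ => inversion H; subst; clear H
  | H : repl _ _ BEmpM _ |- _ => inversion H; subst; clear H
  | H : repl _ _ BEmpA _ |- _ => inversion H; subst; clear H
  end.

Lemma repl_bequiv d e : bequiv d e ->
  (forall d', repl A B d d' -> exists e', repl A B e e' /\ bequiv d' e') /\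
  (forall e', repl A B e e' -> exists d', repl A B d d' /\ bequiv d' e').
Proof.
  induction 1; split; intros x Hx.
  - exists x; split; auto; constructor.
  - exists x; split; auto; constructor.
  - destruct IHbequiv as [_ H2]. destruct (H2 _ Hx) as [y [? ?]]. exists y; split; auto. apply beq_sym; auto.
  - destruct IHbequiv as [H1 _]. destruct (H1 _ Hx) as [y [? ?]]. exists y; split; auto. apply beq_sym; auto.
  - destruct IHbequiv1 as [H1 _]; destruct IHbequiv2 as [H3 _].
    destruct (H1 _ Hx) as [y [Ry Ey]]. destruct (H3 _ Ry) as [z [Rz Ez]].
    exists z; split; auto. eapply beq_trans; eauto.
  - destruct IHbequiv1 as [_ H1]; destruct IHbequiv2 as [_ H3].
    destruct (H3 _ Hx) as [y [Ry Ey]]. destruct (H1 _ Ry) as [z [Rz Ez]].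
    exists z; split; auto. eapply beq_trans; eauto.
  - rinv. eexists; split; [constructor; eauto | apply beq_comma_comm].
  - rinv. eexists; split; [constructor; eauto | apply beq_comma_comm].
  - rinv. eexists; split; [constructor; [constructor|]; eauto | apply beq_comma_assoc].
  - rinv. eexists; split; [constructor; [|constructor]; eauto | apply beq_comma_assoc].
  - rinv. eexists; split; [eauto | apply beq_comma_unit].
  - eexists; split; [constructor; [eauto|constructor] | apply beq_comma_unit].
  - rinv. eexists; split; [constructor; eauto | apply beq_semi_comm].
  - rinv. eexists; split; [constructor; eauto | apply beq_semi_comm].
  - rinv. eexists; split; [constructor; [constructor|]; eauto | apply beq_semi_assoc].
  - rinv. eexists; split; [constructor; [|constructor]; eauto | apply beq_semi_assoc].
  - rinv. eexists; split; [eauto | apply beq_semi_unit].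
  - eexists; split; [constructor; [eauto|constructor] | apply beq_semi_unit].
  - destruct IHbequiv as [H1 _].
    destruct (repl_fill_inv _ _ _ Hx) as [c' [g' [E [Hc Hg]]]]; subst.
    destruct (H1 _ Hg) as [y [? ?]]. exists (fill c' y); split.
    + apply repl_fill; auto.
    + apply beq_ctx; auto.
  - destruct IHbequiv as [_ H1].
    destruct (repl_fill_inv _ _ _ Hx) as [c' [g' [E [Hc Hg]]]]; subst.
    destruct (H1 _ Hg) as [y [? ?]]. exists (fill c' y); split.
    + apply repl_fill; auto.
    + apply beq_ctx; auto.
Qed.

Definition shape :=
  (exists p q, A = FStar p q /\ B = BComma (BForm p) (BForm q)) \/
  (exists p q, A = FAnd p q /\ B = BSemi (BForm p) (BForm q)) \/
  (A = FEmp /\ B = BEmpM) \/ (A = FTop /\ B = BEmpA).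

End R.

Ltac fi H := let c' := fresh "c'" in let g' := fresh "g'" in
  let Hc := fresh "Hc" in let Hg := fresh "Hg" in
  destruct (repl_fill_inv _ _ _ _ _ H) as [c' [g' [? [Hc Hg]]]]; subst.

Ltac shp HAB := destruct HAB as [[?p [?q [?E1 ?E2]]]|[[?p [?q [?E1 ?E2]]]|[[?E1 ?E2]|[?E1 ?E2]]]];
  try discriminate; subst.

Lemma cf_repl A B (HAB : shape A B) d r : cf d r -> forall d', repl A B d d' -> cf d' r.
Proof.
  induction 1; intros x Hx.
  - inversion Hx; subst. constructor. shp HAB.
  - destruct (proj1 (repl_bequiv A B _ _ H0) _ Hx) as [y [Ry Ey]].
    eapply cf_equiv; [apply IHcf; eauto | auto].
  - fi Hx. inversion Hg; subst. apply cf_W. apply IHcf. apply repl_fill; auto.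
  - fi Hx. apply cf_C. apply IHcf. apply repl_fill; auto. constructor; auto.
  - inversion Hx; subst. constructor.
  - fi Hx. inversion Hg; subst.
    + apply cf_empL. apply IHcf. apply repl_fill; auto. constructor.
    + shp HAB; try (injection E1; intros; subst; discriminate).
      apply IHcf. apply repl_fill; auto. constructor.
  - inversion Hx; subst. constructor; auto.
  - fi Hx. inversion Hg; subst.
    + apply cf_starL. apply IHcf. apply repl_fill; auto. repeat constructor.
    + shp HAB; try discriminate. injection E1; intros; subst.
      apply IHcf. apply repl_fill; auto. repeat constructor.
  - apply cf_wandR. apply IHcf. constructor; auto. constructor.
  - fi Hx. inversion Hg; subst. match goal with H: repl _ _ (BComma d1 d2) _ |- _ => inversion H; subst end; match goal with H: repl _ _ (BForm (FWand p q)) _ |- _ => inversion H; subst end.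
    + apply cf_wandL; auto. apply IHcf2. apply repl_fill; auto. constructor; auto. constructor.
    + shp HAB.
  - inversion Hx; subst. constructor.
  - fi Hx. inversion Hg; subst.
    + apply cf_topL. apply IHcf. apply repl_fill; auto. constructor.
    + shp HAB. apply IHcf. apply repl_fill; auto. constructor.
  - inversion Hx; subst. constructor; auto.
  - fi Hx. inversion Hg; subst.
    + apply cf_andL. apply IHcf. apply repl_fill; auto. repeat constructor.
    + shp HAB; try discriminate. injection E1; intros; subst.
      apply IHcf. apply repl_fill; auto. repeat constructor.
  - apply cf_impR. apply IHcf. constructor; auto. constructor.
  - fi Hx. inversion Hg; subst. match goal with H: repl _ _ (BSemi d1 d2) _ |- _ => inversion H; subst end; match goal with H: repl _ _ (BForm (FImp p q)) _ |- _ => inversion H; subst end.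
    + apply cf_impL; auto. apply IHcf2. apply repl_fill; auto. constructor; auto. constructor.
    + shp HAB.
  - fi Hx. inversion Hg; subst.
    + apply cf_botL.
    + shp HAB.
  - apply cf_orR1; auto.
  - apply cf_orR2; auto.
  - fi Hx. inversion Hg; subst.
    + apply cf_orL. apply IHcf1. apply repl_fill; auto. constructor.
      apply IHcf2. apply repl_fill; auto. constructor.
    + shp HAB.
Qed.

Lemma replc_refl A B c : replc A B c c.
Proof. induction c; constructor; auto; apply repl_refl. Qed.

Fixpoint phi (g : bunch) : form :=
  match g with
  | BForm p => p
  | Defs.BEmpM _ => FEmp
  | Defs.BEmpA _ => FTop
  | BComma g1 g2 => FStar (phi g1) (phi g2)
  | BSemi g1 g2 => FAnd (phi g1) (phi g2)
  end.

Lemma unfoldL g : forall c r, cf (fill c (BForm (phi g))) r -> cf (fill c g) r.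
Proof.
  induction g; simpl; intros c r H; auto.
  - eapply (cf_repl FEmp BEmpM); [right; right; left; auto | exact H |].
    apply repl_fill; [apply replc_refl | constructor].
  - eapply (cf_repl FTop BEmpA); [right; right; right; auto | exact H |].
    apply repl_fill; [apply replc_refl | constructor].
  - assert (H1 : cf (fill c (BComma (BForm (phi g1)) (BForm (phi g2)))) r).
    { eapply cf_repl; [left; eauto | exact H |].
      apply repl_fill; [apply replc_refl | constructor]. }
    pose proof (IHg1 (ccomp c (CCommaL CHole (BForm (phi g2)))) r) as K1; rewrite !fill_comp in K1; simpl in K1.
    pose proof (IHg2 (ccomp c (CCommaR g1 CHole)) r) as K2; rewrite !fill_comp in K2; simpl in K2.
    apply K2, K1, H1.
  - assert (H1 : cf (fill c (BSemi (BForm (phi g1)) (BForm (phi g2)))) r).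
    { eapply cf_repl; [right; left; eauto | exact H |].
      apply repl_fill; [apply replc_refl | constructor]. }
    pose proof (IHg1 (ccomp c (CSemiL CHole (BForm (phi g2)))) r) as K1; rewrite !fill_comp in K1; simpl in K1.
    pose proof (IHg2 (ccomp c (CSemiR g1 CHole)) r) as K2; rewrite !fill_comp in K2; simpl in K2.
    apply K2, K1, H1.
Qed.

Lemma foldL g : forall c r, cf (fill c g) r -> cf (fill c (BForm (phi g))) r.
Proof.
  induction g; simpl; intros c r H; auto.
  - apply cf_empL; auto.
  - apply cf_topL; auto.
  - apply cf_starL.
    pose proof (IHg1 (ccomp c (CCommaL CHole (BForm (phi g2)))) r) as K1; rewrite !fill_comp in K1; simpl in K1.
    pose proof (IHg2 (ccomp c (CCommaR g1 CHole)) r) as K2; rewrite !fill_comp in K2; simpl in K2.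
    apply K1, K2, H.
  - apply cf_andL.
    pose proof (IHg1 (ccomp c (CSemiL CHole (BForm (phi g2)))) r) as K1; rewrite !fill_comp in K1; simpl in K1.
    pose proof (IHg2 (ccomp c (CSemiR g1 CHole)) r) as K2; rewrite !fill_comp in K2; simpl in K2.
    apply K1, K2, H.
Qed.

Lemma impR_inv (d : bunch) (f : form) : cf d f -> forall p q, f = FImp p q -> cf (BSemi d (BForm p)) q.
Proof.
  induction 1; intros p0 q0 E; try discriminate.
  all: try (injection E; intros; subst; assumption).
  all: try match goal with |- cf (BSemi (fill ?c ?X) ?Y) _ => change (cf (fill (CSemiL c Y) X) q0) end.
  all: subst.
  - eapply cf_equiv; [apply IHcf; eauto|]. apply (beq_ctx (CSemiL CHole (BForm p0))); auto.
  - apply cf_W. exact (IHcf _ _ eq_refl).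
  - apply cf_C. exact (IHcf _ _ eq_refl).
  - apply cf_empL. exact (IHcf _ _ eq_refl).
  - apply cf_starL. exact (IHcf _ _ eq_refl).
  - apply cf_wandL; auto. exact (IHcf2 _ _ eq_refl).
  - apply cf_topL. exact (IHcf _ _ eq_refl).
  - apply cf_andL. exact (IHcf _ _ eq_refl).
  - apply cf_impL; auto. exact (IHcf2 _ _ eq_refl).
  - apply cf_botL.
  - apply cf_orL. exact (IHcf1 _ _ eq_refl). exact (IHcf2 _ _ eq_refl).
Qed.

End P.

Theorem proposition6p5 (Atom : Type) (X Y : bset Atom) :
  inC X -> inC Y ->
  inC (heyting_imp X Y) /\
  (forall Z : bset Atom, inC Z ->
     (subset (fun d => Z d /\ X d) Y <-> subset Z (heyting_imp X Y))).
Proof.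
  intros HX HY. split.
  - intro G. split.
    + intros HG p Hp. apply Hp; auto.
    + intros HG d' Xd'. apply (proj2 (HY _)). intros psi Hpsi.
      assert (Hc : out (FImp (phi _ d') psi) G).
      { apply HG. intros G0 HG0. unfold out. apply cf_impR.
        apply (foldL _ d' (CSemiR G0 (Defs.CHole _))). simpl.
        apply Hpsi. apply HG0; auto. }
      apply (unfoldL _ d' (CSemiR G (Defs.CHole _))). simpl.
      eapply impR_inv; eauto.
  - intros Z HZ. split.
    + intros HS d Zd d' Xd'. apply HS. split.
      * apply (proj2 (HZ _)). intros p Hp. apply (cf_W (Defs.CHole _)). apply Hp; auto.
      * apply (proj2 (HX _)). intros p Hp.
        eapply cf_equiv; [| apply beq_semi_comm].
        apply (cf_W (Defs.CHole _)). apply Hp; auto.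
    + intros HS d [Zd Xd]. apply (proj2 (HY _)). intros p Hp.
      apply (cf_C (Defs.CHole _)). apply Hp. apply HS; auto.
Qed.
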